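(* For every integer $p\geq 2$ and $d\geq 3$ there exists a finite group $\Gamma$ and a subset $D=\{\gamma_1,\ldots,\gamma_d\}\subseteq\Gamma$ with $|D|=d$ such that $(\Gamma,D)$ satisfies condition $\mathcal{G}(p)$.
   Context: For $p\geq 1$, the pair $(\Gamma,D)$ (with $\Gamma$ having identity $e$) satisfies condition $\mathcal{R}(p)$ if for every sequence of indices $i_0,\ldots,i_{2p-1}\in\{1,\ldots,d\}$ the equality $\gamma_{i_0}\gamma_{i_1}^{-1}\gamma_{i_2}\gamma_{i_3}^{-1}\cdots\gamma_{i_{2p-2}}\gamma_{i_{2p-1}}^{-1}=e$ implies $i_l=i_{l+1}$ for some $l\in\{0,\ldots,2p-1\}$ (indices modulo $2p$). It satisfies $\mathcal{G}(p)$ if it satisfies $\mathcal{R}(1),\ldots,\mathcal{R}(p)$. *)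

(* Defs.v *)
From mathcomp Require Import all_boot all_fingroup.
Set Implicit Arguments. Unset Strict Implicit. Unset Printing Implicit Defensive.
Local Open Scope group_scope.

Definition alt_word (gT : finGroupType) (d : nat) (gam : 'I_d -> gT)
  (p : nat) (i : nat -> 'I_d) : gT :=
  foldr (fun k acc => gam (i k.*2) * (gam (i k.*2.+1))^-1 * acc) 1 (iota 0 p).

Definition cond_R (gT : finGroupType) (d : nat) (gam : 'I_d -> gT) (p : nat) : Prop :=
  forall i : nat -> 'I_d,
    alt_word gam p i = 1 ->
    exists l, l < p.*2 /\ i l = i ((l.+1) %% p.*2).

Definition cond_G (gT : finGroupType) (d : nat) (gam : 'I_d -> gT) (p : nat) : Prop :=
  forall q, 1 <= q <= p -> cond_R gam q.

(* Main.v *)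
Require Import Defs.
From mathcomp Require Import all_boot all_fingroup.
Set Implicit Arguments. Unset Strict Implicit. Unset Printing Implicit Defensive.

Local Open Scope group_scope.
Section C.
Variables (d N : nat).

Definition neqr : rel 'I_d := fun a b => a != b.

Fixpoint words (n : nat) : seq (seq 'I_d) :=
  match n with 0 => [:: [::]]
  | n'.+1 => [::] :: [seq x :: s | x <- enum 'I_d, s <- words n'] end.

Lemma mem_words n s : (s \in words n) = (size s <= n).
Proof.
elim: n s => [|n IH] [|x t] //=; rewrite ?inE //.
rewrite (_ : (x::t == [::]) = false) // orFb ltnS -IH.
apply/allpairsP/idP.
  by by case=> [[a b]] /= [_ Hb E]; case: E => _ ->.
by move=> Ht; exists (x, t); rewrite /= mem_enum.
Qed.

Definition sig (j : 'I_d) (s : seq 'I_d) : seq 'I_d :=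
  if sorted neqr s && (ohead s == Some j) then behead s
  else if sorted neqr s && (size s < N) then j :: s else s.

Lemma sig_size j s : size s <= N -> size (sig j s) <= N.
Proof.
rewrite /sig => H; case: ifP => _; first by case: s H => //= x t; apply: ltnW.
by case: ifP => // /andP[].
Qed.

Lemma sig_pop j t : sorted neqr (j :: t) -> sig j (j :: t) = t.
Proof. by rewrite /sig => ->; rewrite /= eqxx. Qed.

Lemma sig_push j s : sorted neqr s -> ohead s != Some j -> size s < N -> sig j s = j :: s.
Proof. by rewrite /sig => -> /negbTE -> ->. Qed.

Lemma sig_fix j s : (sorted neqr s -> ohead s != Some j /\ N <= size s) -> sig j s = s.
Proof.
rewrite /sig; case: (boolP (sorted neqr s)) => Hs H //=.
case: (H isT) => /negbTE -> HN; by rewrite ltnNge HN.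
Qed.

Lemma sorted_tl (x : 'I_d) t : sorted neqr (x :: t) -> sorted neqr t.
Proof. by case: t => //= y u /andP[]. Qed.

Lemma oh_tl (x : 'I_d) t : sorted neqr (x :: t) -> ohead t != Some x.
Proof. by case: t => //= y u /andP[Hxy _]; apply/eqP => [[E]]; move: Hxy; rewrite /neqr E eqxx. Qed.

Lemma sigK j s : size s <= N -> sig j (sig j s) = s.
Proof.
move=> H.
case: (boolP (sorted neqr s)) => Hs; last by rewrite !sig_fix // => /(negP Hs).
case: (boolP (ohead s == Some j)) => Ho.
  case: s H Hs Ho => //= x t H Hs /eqP [E]; subst x.
  rewrite (sig_pop Hs) sig_push //; by [exact: sorted_tl Hs | exact: oh_tl Hs | apply: leq_trans H].
case: (ltnP (size s) N) => HN.
  rewrite (sig_push Hs Ho HN) sig_pop //.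
  case: s Hs Ho {H HN} => //= x t -> Ho; rewrite andbT /neqr eq_sym.
  by apply/eqP => E; move: Ho; rewrite E eqxx.
by rewrite !sig_fix.
Qed.

Definition V := seq_sub (words N).

Definition sigV (j : 'I_d) (v : V) : V := insubd v (sig j (ssval v)).

Lemma sigV_val j v : ssval (sigV j v) = sig j (ssval v).
Proof.
rewrite /sigV insubdK // -topredE /= mem_words sig_size //.
by rewrite -mem_words; exact: (valP v).
Qed.

Lemma sigVK j : involutive (sigV j).
Proof.
move=> v; apply: val_inj => /=; rewrite !sigV_val sigK //.
by rewrite -mem_words; exact: (valP v).
Qed.

Definition g (j : 'I_d) : {perm V} := perm (inv_inj (sigVK j)).

Lemma gE j v : g j v = sigV j v.
Proof. by rewrite permE. Qed.

Lemma ginv j : (g j)^-1 = g j.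
Proof.
apply/eqP; rewrite eq_invg_mul; apply/eqP/permP => v.
by rewrite permM !gE sigVK perm1.
Qed.

Definition P (l : seq 'I_d) : {perm V} := foldr (fun a acc => g a * acc) 1 l.

Lemma P_val l v : sorted neqr (catrev l (ssval v)) -> size (catrev l (ssval v)) <= N ->
  ssval (P l v) = catrev l (ssval v).
Proof.
elim: l v => [|a l IH] v /=; first by rewrite perm1.
move=> Hs Hz; rewrite permM.
have Hv : ssval (g a v) = a :: ssval v.
  rewrite gE sigV_val /sig.
  rewrite catrevE in Hs Hz.
  move: (cat_sorted2 Hs) => [_ Hav].
  have Hsv : sorted neqr (ssval v) by case: (ssval v) Hav => //= y u /andP[].
  rewrite Hsv /=.
  have -> : (ohead (ssval v) == Some a) = false.
    by case: (ssval v) Hav => //= y u /andP[Hxy _]; apply/eqP => [[E]]; move: Hxy; rewrite /neqr E eqxx.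
  rewrite size_cat /= in Hz.
  by rewrite (leq_trans _ Hz) // leq_addl.
by have := IH (g a v); rewrite Hv; apply.
Qed.

End C.

Lemma path_iota d (i : nat -> 'I_d) m n :
  (forall k, m <= k -> k < m + n -> i k != i k.+1) ->
  path (fun x y : 'I_d => @neqr d y x) (i m) (map i (iota m.+1 n)).
Proof.
elim: n m => [|n IH] m H //=.
apply/andP; split.
  by rewrite /neqr eq_sym; apply: H => //; rewrite addnS ltnS leq_addr.
apply: IH => k Hk Hk2; apply: H; first exact: ltnW.
by rewrite addnS -addSn.
Qed.

Lemma alt_P d N (i : nat -> 'I_d) m n :
  foldr (fun k acc => g N (i k.*2) * (g N (i k.*2.+1))^-1 * acc) 1 (iota m n)
  = P N (map i (iota m.*2 n.*2)).
Proof.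
elim: n m => [|n IH] m //=.
by rewrite IH doubleS ginv -mulgA.
Qed.

Theorem proposition5p4 (p d : nat) :
  2 <= p -> 3 <= d ->
  exists (gT : finGroupType) (gam : 'I_d -> gT),
    injective gam /\ cond_G gam p.
Proof.
move=> Hp Hd.
pose N := p.*2.
have e0P : [::] \in words d N by rewrite mem_words.
pose e0 : V d N := SeqSub e0P.
have HN : 0 < N by rewrite /N double_gt0 (leq_trans _ Hp).
exists (perm_of (V d N)), (g N).
split.
  move=> a b E.
  have : ssval (g N a e0) = ssval (g N b e0) by rewrite E.
  by rewrite !gE !sigV_val /= !sig_push // => -[].
move=> q /andP[Hq1 Hqp] i Hw.
case: (boolP [exists l : 'I_(q.*2), i l == i ((l.+1) %% q.*2)]) => [/existsP [l /eqP E]|Hne].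
  by exists l; split => //; exact: ltn_ord.
exfalso.
have Hq2 : 0 < q.*2 by rewrite double_gt0.
have Hk : forall k, 0 <= k -> k < 0 + (q.*2).-1 -> i k != i k.+1.
  move=> k _ Hk; have Hk2 : k.+1 < q.*2 by rewrite -(prednK Hq2) ltnS.
  apply/negP => /eqP E; move/negP: Hne; apply; apply/existsP.
  by exists (Ordinal (ltnW Hk2)); rewrite /= modn_small // E.
pose L := map i (iota 0 q.*2).
have HL : sorted (@neqr d) (rev L).
  rewrite rev_sorted /L -(prednK Hq2) /=.
  exact: path_iota Hk.
have Hsz : size (catrev L (ssval e0)) <= N.
  by rewrite /= catrevE cats0 size_rev size_map size_iota leq_double.
have HP := P_val (l:=L) (v:=e0).
rewrite /= catrevE cats0 in HP Hsz.
have HPL : P N L = 1 by rewrite -Hw /alt_word alt_P.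
move: (HP HL Hsz); rewrite HPL perm1 /= => /(congr1 size).
by rewrite size_rev size_map size_iota /= => E; rewrite -E in Hq2.
Qed.
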